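(* Let $\mathfrak{X}=(X,\{R_i\}_{i=0}^s)$ be a symmetric association scheme with $|X|=n$ which is $Q$-polynomial with respect to $E_1$, and let $m=\mathrm{rank}\,E_1$. Let $\tilde X=\{\tilde x:x\in X\}\subset\mathbb{R}^m$ be the image of the spherical embedding of $\mathfrak{X}$ with respect to $E_1$, i.e. vectors with $\tilde x\cdot\tilde y=n(E_1)_{x,y}$ for all $x,y\in X$, regarded as a spherical $2$-design and $s$-distance set in $\sqrt{m}\,\mathbb{S}^{m-1}$ of size $n$. Then the degree $S$ of $\tilde X$ equals $s$, and for each $i\in\{0,1,\dots,s\}$ the projection matrices of $\tilde X$ satisfy $F_i=\frac1n q_i((nG)^\circ)$, where $G$ is the normalized Gram matrix and $q_0,\dots,q_s$ are the predegree polynomials of $\tilde X$.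
   Context: A symmetric association scheme $(X,\{R_i\}_{i=0}^s)$: $X$ finite, $R_0$ the diagonal, the $R_i$ partition $X\times X$, each $R_i$ symmetric, and $|\{z:(x,z)\in R_i,(z,y)\in R_j\}|$ depends only on $i,j$ and the $k$ with $(x,y)\in R_k$. Its adjacency matrices span a commutative algebra (the Bose–Mesner algebra) with primitive idempotents $E_0=\frac1nJ,E_1,\dots,E_s$. For a matrix $M$ and polynomial $f$, $f(M^\circ)$ is the matrix obtained by applying $f$ entrywise. The scheme is $Q$-polynomial with respect to $E_1$ if, for some ordering $E_0,E_1,E_{i_2},\dots,E_{i_s}$ of the idempotents, each $n E_{(\text{$j$-th})}=v_j^*((nE_1)^\circ)$ for a polynomial $v_j^*$ of degree $j$. (It is known that the embedded set $\tilde X$ lies on $\sqrt m\,\mathbb{S}^{m-1}$, is a spherical $2$-design and here is an $s$-distance set.) For a finite $Y\subset\sqrt{m}\,\mathbb{S}^{m-1}=\{\bm x:\bm x\cdot\bm x=m\}$ with $|Y|=n$: $A'(Y)=\{\bm x\cdot\bm y:\bm x\ne\bm y\in Y\}\cup\{m\}$. $C(Y)$: real functions with $(f,g)=\frac1n\sum f g$; $\zeta_{\bm a}(p)(\bm x)=p(\bm a\cdot\bm x)$; $\mathrm{Pol}_0$ = constants, $\mathrm{Pol}_1=\mathrm{Span}\{\zeta_{\bm a}(p):\deg p\le1\}$, $\mathrm{Pol}_k=\mathrm{Span}\{fg:f\in\mathrm{Pol}_1,g\in\mathrm{Pol}_{k-1}\}$ (equivalently $\mathrm{Span}\{\zeta_{\bm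 a}(p):\deg p\le k\}$); degree $S=\min\{i:\mathrm{Pol}_i(Y)=C(Y)\}$; $\mathrm{Harm}_0=\mathrm{Pol}_0$, $\mathrm{Harm}_k=\mathrm{Pol}_k\cap\mathrm{Pol}_{k-1}^\perp$; $F_i$ is the matrix of the orthogonal projection onto $\mathrm{Harm}_i(Y)$, matrices acting by $(Mf)(\bm x)=\sum_{\bm y}M_{\bm x,\bm y}f(\bm y)$. $G=\frac1n(\bm x\cdot\bm y)_{\bm x,\bm y}$. With $\kappa_\alpha=|\{(\bm x,\bm y):\bm x\cdot\bm y=\alpha\}|$ and $\langle p,q\rangle=\frac1{n^2}\sum_{\alpha\in A'(Y)}\kappa_\alpha p(\alpha)q(\alpha)$, the predegree polynomials $q_0,\dots,q_s$ satisfy $\deg q_k=k$ and $\langle q_k,q_h\rangle=\delta_{k,h}q_k(m)$. *)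

(* Defs.v *)
From HB Require Import structures.
From mathcomp Require Import all_boot all_order all_algebra.
Set Implicit Arguments. Unset Strict Implicit. Unset Printing Implicit Defensive.
Import Order.TTheory GRing.Theory Num.Theory.
Local Open Scope ring_scope.

(* The point set X is labelled as 'I_n; the relations are given by a
   class function rc : X -> X -> 'I_s.+1, with (x,y) \in R_i <-> rc x y = i. *)
Definition is_sym_assoc_scheme (n s : nat) (rc : 'I_n -> 'I_n -> 'I_s.+1) : Prop :=
  [/\ (forall x y, (rc x y == ord0) = (x == y)),
      (forall x y, rc x y = rc y x),
      (forall i : 'I_s.+1, exists x y, rc x y = i) &
      (forall (i j : 'I_s.+1) (x y x' y' : 'I_n), rc x y = rc x' y' ->
         #|[set z | (rc x z == i) && (rc z y == j)]|
         = #|[set z | (rc x' z == i) && (rc z y' == j)]|)].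

Definition adjm (R : nzRingType) (n s : nat) (rc : 'I_n -> 'I_n -> 'I_s.+1)
  (i : 'I_s.+1) : 'M[R]_n := \matrix_(x, y) (rc x y == i)%:R.

Definition in_BM (R : nzRingType) (n s : nat) (rc : 'I_n -> 'I_n -> 'I_s.+1)
  (M : 'M[R]_n) : Prop :=
  exists c : 'I_s.+1 -> R, M = \sum_i c i *: adjm R rc i.

(* E_0, ..., E_s are the primitive idempotents of the Bose-Mesner algebra
   (s+1 nonzero pairwise orthogonal idempotents in the (s+1)-dimensional
   algebra, summing to the identity), with E_0 = J/n. *)
Definition primitive_idempotents (R : fieldType) (n s : nat)
  (rc : 'I_n -> 'I_n -> 'I_s.+1) (E : 'I_s.+1 -> 'M[R]_n) : Prop :=
  [/\ (forall i, in_BM rc (E i)),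
      (forall i j, E i *m E j = (i == j)%:R *: E i),
      (forall i, E i != 0),
      \sum_i E i = 1%:M &
      E ord0 = (n%:R)^-1 *: const_mx 1].

(* Q-polynomial with respect to E_1 = E (inord 1), in the ordering given by E:
   n E_j = v_j^*((n E_1)^o) with deg v_j^* = j. *)
Definition Q_polynomial (R : fieldType) (n s : nat) (E : 'I_s.+1 -> 'M[R]_n) : Prop :=
  exists v : 'I_s.+1 -> {poly R},
    forall j : 'I_s.+1, size (v j) = j.+1 /\
      n%:R *: E j = map_mx (fun a => (v j).[a]) (n%:R *: E (inord 1)).

Definition dotv (R : nzRingType) (m : nat) (u v : 'rV[R]_m) : R := (u *m v^T) 0 0.

Section Sphere.
Variables (R : realFieldType) (n m : nat) (Y : 'I_n -> 'rV[R]_m).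

(* C(Y): real functions on Y, represented as column vectors indexed by 'I_n *)
Definition innerC (g h : 'cV[R]_n) : R := (n%:R)^-1 * \sum_x g x 0 * h x 0.

Definition zeta (a : 'rV[R]_m) (p : {poly R}) : 'cV[R]_n :=
  \col_x p.[dotv a (Y x)].

Definition inPol (k : nat) (g : 'cV[R]_n) : Prop :=
  exists l : seq ('rV[R]_m * {poly R}),
    all (fun ap : 'rV[R]_m * {poly R} => (size ap.2 <= k.+1)%N) l /\
    g = \sum_(ap <- l) zeta ap.1 ap.2.

Definition inHarm (k : nat) (g : 'cV[R]_n) : Prop :=
  match k with
  | 0 => inPol 0 g
  | k'.+1 => inPol k g /\ (forall h, inPol k' h -> innerC g h = 0)
  end.

Definition is_orth_proj (H : 'cV[R]_n -> Prop) (F : 'M[R]_n) : Prop :=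
  forall g, H (F *m g) /\ (forall h, H h -> innerC (g - F *m g) h = 0).

Definition is_degree (S : nat) : Prop :=
  (forall g, inPol S g) /\ (forall i, (i < S)%N -> ~ (forall g, inPol i g)).

Definition Aprime : seq R :=
  undup (m%:R :: [seq dotv (Y p.1) (Y p.2) | p <- enum [pred p : 'I_n * 'I_n | p.1 != p.2]]).

Definition kappa (a : R) : nat :=
  #|[pred p : 'I_n * 'I_n | dotv (Y p.1) (Y p.2) == a]|.

Definition pinner (p q : {poly R}) : R :=
  (n%:R ^+ 2)^-1 * \sum_(a <- Aprime) (kappa a)%:R * p.[a] * q.[a].

Definition predegree (s : nat) (q : nat -> {poly R}) : Prop :=
  forall k h, (k <= s)%N -> (h <= s)%N ->
    size (q k) = k.+1 /\ pinner (q k) (q h) = (k == h)%:R * (q k).[m%:R].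

End Sphere.

(* Main.v *)
Require Import Defs.
From mathcomp Require Import all_boot all_order all_algebra.
Import GRing.Theory Num.Theory.
Set Implicit Arguments. Unset Strict Implicit. Unset Printing Implicit Defensive.
From mathcomp Require Import ring.
Local Open Scope ring_scope.

Lemma mx_ext_mul (R : nzRingType) n (A B : 'M[R]_n) :
  (forall g : 'cV[R]_n, A *m g = B *m g) -> A = B.
Proof.
move=> H; apply/matrixP=> i j.
have := congr1 (fun M : 'cV[R]_n => M i 0) (H (delta_mx j 0)).
by rewrite /= -!colE !mxE.
Qed.

Lemma tr_idem (F : fieldType) n (A : 'M[F]_n) : A *m A = A -> \tr A = (\rank A)%:R.
Proof.
move=> AA.
have RC : row_base A *m col_base A = 1%:M.
  apply: (row_full_inj (col_base_full A)); apply: (row_free_inj (row_base_free A)).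
  have hb := mulmx_base A.
  set C := col_base A in hb *; set B := row_base A in hb *.
  rewrite mulmx1 (mulmxA C B C) hb -mulmxA hb AA //.
by rewrite -{1}(mulmx_base A) mxtrace_mulC RC mxtrace1.
Qed.

Lemma sqr_sum (R : comNzRingType) (I : finType) (f : I -> R) :
  (\sum_i f i) ^+ 2 = \sum_i \sum_j f i * f j.
Proof. by rewrite expr2 mulr_suml; apply: eq_bigr => i _; rewrite mulr_sumr. Qed.

Lemma idem_sum (R : comNzRingType) n (M : 'M[R]_n) : M *m M = M -> M^T = M ->
  forall x x', M x x' = \sum_y M x y * M x' y.
Proof.
move=> HM HMs x x'; rewrite -{1}HM mxE; apply: eq_bigr => y _.
by rewrite -{2}HMs mxE.
Qed.

Lemma Gsum (R : comNzRingType) n (M : 'M[R]_n) : M *m M = M -> M^T = M ->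
  forall (a : 'I_n -> R) (c : 'I_n -> 'I_n -> R),
  \sum_y \sum_x \sum_x' (a x * M x y) * (a x' * M x' y) * c x x'
  = \sum_x \sum_x' a x * a x' * c x x' * M x x'.
Proof.
move=> HM HMs a c; rewrite exchange_big; apply: eq_bigr => x _.
rewrite exchange_big; apply: eq_bigr => x' _.
rewrite (idem_sum HM HMs) mulr_sumr; apply: eq_bigr => y _; ring.
Qed.

Lemma poly_expand (R : fieldType) s (w : 'I_s.+1 -> {poly R}) :
  (forall j, size (w j) = j.+1) ->
  forall k, (k <= s.+1)%N -> forall p : {poly R}, (size p <= k)%N ->
  exists c : 'I_s.+1 -> R, (forall h : 'I_s.+1, (k <= h)%N -> c h = 0) /\
     p = \sum_h c h *: w h.
Proof.
move=> Hw; elim=> [|k IH] Hk p Hp.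
  exists (fun _ => 0); split=> // ; move: Hp; rewrite size_poly_leq0 => /eqP ->.
  by rewrite big1 // => h _; rewrite scale0r.
set h0 : 'I_s.+1 := inord k.
have h0E : (h0 : nat) = k by rewrite inordK.
have lw : lead_coef (w h0) != 0 by rewrite lead_coef_eq0 -size_poly_eq0 Hw.
set a := p`_k / lead_coef (w h0).
have Hp' : (size (p - a *: w h0)%R <= k)%N.
  apply/leq_sizeP => j kj; rewrite coefB coefZ.
  case: (ltngtP k j) kj => // [kj|<-] _.
    by rewrite !nth_default ?mulr0 ?subr0 // ?Hw ?h0E // (leq_trans Hp kj).
  have lk : (w h0)`_k = lead_coef (w h0) by rewrite lead_coefE Hw h0E.
  by rewrite lk /a divfK // subrr.
have [c' [c'0 Hc']] := IH (ltnW Hk) _ Hp'.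
exists (fun h => c' h + (h == h0)%:R * a); split.
  move=> h kh; rewrite c'0 ?(ltnW kh) //.
  have : h != h0 by apply/eqP=> hh; move: kh; rewrite hh h0E ltnn.
  by move/negbTE->; rewrite mul0r addr0.
rewrite -[p](subrK (a *: w h0)) Hc'.
apply/esym; rewrite (eq_bigr (fun h => c' h *: w h + ((h == h0)%:R * a) *: w h)); last first.
  by move=> h _; rewrite scalerDl.
rewrite big_split /=; congr (_ + _).
rewrite (bigD1 h0) //= eqxx mul1r big1 ?addr0 // => h /negbTE ->.
by rewrite mul0r scale0r.
Qed.

Section Main.
Variables (R : realFieldType) (n s : nat) (rc : 'I_n -> 'I_n -> 'I_s.+1)
  (E : 'I_s.+1 -> 'M[R]_n) (m : nat) (Y : 'I_n -> 'rV[R]_m) (v : 'I_s.+1 -> {poly R}).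
Hypothesis Hs : (0 < s)%N.
Hypothesis Hrc0 : forall x y, (rc x y == ord0) = (x == y).
Hypothesis Hsym : forall x y, rc x y = rc y x.
Hypothesis HBM : forall i, in_BM rc (E i).
Hypothesis Hmul : forall i j, E i *m E j = (i == j)%:R *: E i.
Hypothesis Hnz : forall i, E i != 0.
Hypothesis Hsum : \sum_i E i = 1%:M.
Hypothesis HE0 : E ord0 = (n%:R)^-1 *: const_mx 1.
Let e1 : 'I_s.+1 := inord 1.
Hypothesis Hv : forall j, size (v j) = j.+1 /\
      n%:R *: E j = map_mx (fun a => (v j).[a]) (n%:R *: E e1).
Hypothesis Hm : m = \rank (E e1).
Hypothesis Hdot : forall x y, dotv (Y x) (Y y) = n%:R * E e1 x y.

Lemma e1E : (e1 : nat) = 1%N.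
Proof. by rewrite /e1 inordK. Qed.

Lemma Esym i x y : E i x y = E i y x.
Proof.
have [c ->] := HBM i.
by rewrite !summxE; apply: eq_bigr => k _; rewrite !mxE Hsym.
Qed.

Lemma EdiagC i x y : E i x x = E i y y.
Proof.
have [c ->] := HBM i.
rewrite !summxE; apply: eq_bigr => k _; rewrite !mxE.
have ->: rc x x = ord0 by apply/eqP; rewrite Hrc0.
have ->: rc y y = ord0 by apply/eqP; rewrite Hrc0.
by [].
Qed.

Lemma Eidem i : E i *m E i = E i.
Proof. by rewrite Hmul eqxx scale1r. Qed.

Lemma Eorth i j : i != j -> E i *m E j = 0.
Proof. by move/negbTE=> ij; rewrite Hmul ij scale0r. Qed.

Lemma Etr i : (E i)^T = E i.
Proof. by apply/matrixP=> x y; rewrite mxE Esym. Qed.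

Lemma n_gt0 : (0 < n)%N.
Proof.
case: n E Hnz => [|//] E' Hnz'.
by have := Hnz' ord0; rewrite (flatmx0 (E' ord0)) eqxx.
Qed.

Lemma nR_neq0 : (n%:R : R) != 0.
Proof. by rewrite pnatr_eq0 -lt0n n_gt0. Qed.

Lemma trE i : \tr (E i) = (\rank (E i))%:R.
Proof. exact: tr_idem (Eidem i). Qed.

Lemma trE_neq0 i : \tr (E i) != 0.
Proof. by rewrite trE pnatr_eq0 mxrank_eq0 Hnz. Qed.

Lemma Ediag i x : n%:R * E i x x = \tr (E i).
Proof.
rewrite /mxtrace (eq_bigr (fun _ => E i x x)) ?sumr_const ?card_ord ?mulr_natl //.
by move=> y _; rewrite (EdiagC i x y).
Qed.

Lemma dot_diag x : dotv (Y x) (Y x) = m%:R.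
Proof. by rewrite Hdot Ediag trE Hm. Qed.

Lemma Edecomp (g : 'cV[R]_n) : g = \sum_i E i *m g.
Proof. by rewrite -mulmx_suml Hsum mul1mx. Qed.

Lemma Efrob k l : \sum_x \sum_y E k x y * E l x y = (k == l)%:R * \tr (E k).
Proof.
have -> : (k == l)%:R * \tr (E k) = \tr (E k *m E l) by rewrite Hmul mxtraceZ.
rewrite /mxtrace; apply: eq_bigr => x _; rewrite mxE.
by apply: eq_bigr => y _; rewrite (Esym l).
Qed.


Lemma vE h x y : (v h).[n%:R * E e1 x y] = n%:R * E h x y.
Proof.
have := congr1 (fun M : 'M[R]_n => M x y) (Hv h).2.
by rewrite /= !mxE => <-.
Qed.

Lemma poly_span k (p : {poly R}) : (k <= s)%N -> (size p <= k.+1)%N ->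
  exists c : 'I_s.+1 -> R, (forall h : 'I_s.+1, (k < h)%N -> c h = 0) /\
   forall x y, p.[n%:R * E e1 x y] = \sum_h c h * (n%:R * E h x y).
Proof.
move=> ks sp.
have [c [c0 ->]] := poly_expand (fun j => (Hv j).1) (ks : (k.+1 <= s.+1)%N) sp.
exists c; split=> // x y; rewrite horner_sum; apply: eq_bigr => h _.
by rewrite hornerZ vE.
Qed.

Lemma triple (k l j : 'I_s.+1) : (l + j < k)%N ->
  forall w y z, \sum_x E k w x * E l x y * E j x z = 0.
Proof.
move=> ljk.
pose T w y z := \sum_x E k w x * E l x y * E j x z.
have S0 : \sum_w \sum_y \sum_z T w y z ^+ 2 = 0.
  have -> : \sum_w \sum_y \sum_z T w y z ^+ 2 =
      \sum_x \sum_x' (1 * 1 * (E j x x' * E l x x')) * E k x x'.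
    rewrite -(Gsum (Eidem k) (Etr k)); apply: eq_bigr => w _.
    transitivity (\sum_y \sum_x \sum_x' (E k w x * E l x y) * (E k w x' * E l x' y) * E j x x').
      apply: eq_bigr => y _.
      transitivity (\sum_x \sum_x' (E k w x * E l x y) * (E k w x' * E l x' y) * 1 * E j x x'); last first.
        by apply: eq_bigr => x _; apply: eq_bigr => x' _; rewrite mulr1.
      rewrite -(Gsum (Eidem j) (Etr j) (fun x => E k w x * E l x y) (fun _ _ => 1)).
      apply: eq_bigr => z _; rewrite /T sqr_sum; apply: eq_bigr => x _; apply: eq_bigr => x' _.
      ring.
    rewrite (Gsum (Eidem l) (Etr l)); apply: eq_bigr => x _; apply: eq_bigr => x' _.
    rewrite (Esym k w x) (Esym k w x'); ring.
  have sz : (size (v l * v j)%R <= (l + j).+1)%N.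
    rewrite (leq_trans (size_mul_leq _ _)) // !(Hv _).1 addSn addnS.
    by [].
  have [c [c0 Hc]] := poly_span (leq_trans (ltnW ljk) (leq_ord k)) sz.
  apply: (mulfI (mulf_neq0 nR_neq0 nR_neq0)); rewrite mulr0 mulr_sumr.
  rewrite (eq_bigr (fun x => \sum_x' (\sum_h c h * (n%:R * E h x x')) * E k x x')); last first.
    move=> x _; rewrite mulr_sumr; apply: eq_bigr => x' _.
    rewrite -Hc hornerM !vE; ring.
  under eq_bigr do under eq_bigr do rewrite mulr_suml.
  under eq_bigr do rewrite exchange_big.
  rewrite exchange_big /=; apply: big1 => h _.
  have [->|hk] := eqVneq h k.
    by rewrite c0 // big1 // => x _; rewrite big1 // => x' _; rewrite !mul0r.
  transitivity (c h * n%:R * \sum_x \sum_x' E h x x' * E k x x').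
    rewrite mulr_sumr; apply: eq_bigr => x _; rewrite mulr_sumr; apply: eq_bigr => x' _; ring.
  by rewrite Efrob (negbTE hk) mul0r mulr0.
move=> w y z.
have S1 : forall w, \sum_y \sum_z T w y z ^+ 2 = 0.
  move=> w'; apply: (psumr_eq0P _ S0) => // w'' _.
  by apply: sumr_ge0 => y' _; apply: sumr_ge0 => z' _; apply: sqr_ge0.
have S2 : forall w y, \sum_z T w y z ^+ 2 = 0.
  move=> w' y'; apply: (psumr_eq0P _ (S1 w')) => // y'' _.
  by apply: sumr_ge0 => z' _; apply: sqr_ge0.
have : T w y z ^+ 2 = 0.
  by apply: (psumr_eq0P _ (S2 w y)) => // z' _; apply: sqr_ge0.
by move/eqP; rewrite sqrf_eq0 => /eqP.
Qed.

Definition had (f g : 'cV[R]_n) : 'cV[R]_n := \col_x (f x 0 * g x 0).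
Definition W d (g : 'cV[R]_n) := forall k : 'I_s.+1, (d < k)%N -> E k *m g = 0.

Lemma had_tri (k l j : 'I_s.+1) : (l + j < k)%N ->
  forall f g, E k *m had (E l *m f) (E j *m g) = 0.
Proof.
move=> ljk f g; apply/matrixP => w o; rewrite !mxE.
transitivity (\sum_x \sum_y \sum_z E k w x * E l x y * E j x z * f y 0 * g z 0).
  apply: eq_bigr => x _; rewrite !mxE mulrA [E k w x * _]mulr_sumr mulr_suml; apply: eq_bigr => y _.
  rewrite mulr_sumr; apply: eq_bigr => z _; ring.
rewrite exchange_big /=.
transitivity (\sum_y \sum_z (\sum_x E k w x * E l x y * E j x z) * f y 0 * g z 0).
  apply: eq_bigr => y _; rewrite exchange_big /=; apply: eq_bigr => z _.
  by rewrite !mulr_suml.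
by rewrite big1 // => y _; rewrite big1 // => z _; rewrite triple // !mul0r.
Qed.

Lemma had_sum (I J : finType) (F : I -> 'cV[R]_n) (G : J -> 'cV[R]_n) :
  had (\sum_i F i) (\sum_j G j) = \sum_i \sum_j had (F i) (G j).
Proof.
apply/matrixP => x o; rewrite !mxE !summxE mulr_suml; apply: eq_bigr => i _.
by rewrite summxE mulr_sumr; apply: eq_bigr => j _; rewrite !mxE.
Qed.

Lemma had0l g : had 0 g = 0.
Proof. by apply/matrixP => x o; rewrite !mxE mul0r. Qed.
Lemma had0r g : had g 0 = 0.
Proof. by apply/matrixP => x o; rewrite !mxE mulr0. Qed.

Lemma W_had a b f g : W a f -> W b g -> W (a + b) (had f g).
Proof.
move=> Wf Wg k abk; rewrite (Edecomp f) (Edecomp g) had_sum mulmx_sumr.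
apply: big1 => l _; rewrite mulmx_sumr; apply: big1 => j _.
case: (ltnP a l) => [al|la]; first by rewrite Wf // had0l mulmx0.
case: (ltnP b j) => [bj|jb]; first by rewrite Wg // had0r mulmx0.
by apply: had_tri; apply: leq_ltn_trans abk; apply: leq_add.
Qed.

Lemma W_mono d d' g : (d <= d')%N -> W d g -> W d' g.
Proof. by move=> dd Wg k dk; apply: Wg; apply: leq_ltn_trans dk. Qed.

Lemma W0 d : W d 0.
Proof. by move=> k _; rewrite mulmx0. Qed.

Lemma W_add d f g : W d f -> W d g -> W d (f + g).
Proof. by move=> Wf Wg k dk; rewrite mulmxDr Wf // Wg // addr0. Qed.

Lemma W_scale d c g : W d g -> W d (c *: g).
Proof. by move=> Wg k dk; rewrite -scalemxAr Wg // scaler0. Qed.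

Lemma W_one : W 0 (const_mx 1).
Proof.
move=> k k0.
have -> : (const_mx 1 : 'cV[R]_n) = E ord0 *m const_mx 1.
  apply/matrixP => x o; rewrite HE0 !mxE.
  rewrite (eq_bigr (fun _ => n%:R^-1)); last by move=> y _; rewrite !mxE !mulr1.
  by rewrite sumr_const card_ord -[_ *+ n]mulr_natr mulVf ?nR_neq0.
rewrite mulmxA Eorth ?mul0mx //.
by apply/eqP => /(congr1 val) /= k0'; move: k0; rewrite k0'.
Qed.

Definition Ymat : 'M[R]_(n, m) := \matrix_(x, j) Y x 0 j.

Lemma YYt : Ymat *m Ymat^T = n%:R *: E e1.
Proof.
apply/matrixP => x y; rewrite !mxE -Hdot /dotv !mxE; apply: eq_bigr => j _.
by rewrite !mxE.
Qed.

Lemma W_lin (a : 'rV[R]_m) : W 1 (\col_x dotv a (Y x)).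
Proof.
move=> k k1.
have -> : (\col_x dotv a (Y x)) = Ymat *m a^T.
  apply/matrixP => x o; rewrite /dotv !mxE; apply: eq_bigr => j _; rewrite !mxE mulrC.
  by rewrite (ord1 o).
have ke : k != e1 by apply/eqP => ke; move: k1; rewrite ke e1E ltnn.
rewrite mulmxA; suff -> : E k *m Ymat = 0 by rewrite mul0mx.
set B := E k *m Ymat.
have BB : B *m B^T = 0.
  rewrite /B trmx_mul Etr mulmxA -(mulmxA (E k)) YYt -scalemxAr Eorth // scaler0.
  by rewrite mul0mx.
clearbody B; apply/matrixP => x j; rewrite [RHS]mxE.
have := congr1 (fun M : 'M[R]_n => M x x) BB; rewrite !mxE /= => S.
have H0 : forall j', true -> 0 <= B x j' * B^T j' x.
  by move=> j' _; rewrite mxE -expr2 sqr_ge0.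
have := psumr_eq0P H0 S (i:=j) isT; rewrite mxE -expr2.
by move/eqP; rewrite sqrf_eq0 => /eqP.
Qed.


Definition hpow (f : 'cV[R]_n) i := iter i (had f) (const_mx 1).

Lemma hpowE f i x : hpow f i x 0 = f x 0 ^+ i.
Proof.
elim: i => [|i IH]; first by rewrite /hpow /= mxE expr0.
by rewrite /hpow iterS -/(hpow f i) mxE IH exprS.
Qed.

Lemma W_hpow f : W 1 f -> forall i, W i (hpow f i).
Proof.
move=> Wf; elim=> [|i IH]; first exact: W_one.
by rewrite /hpow iterS -/(hpow f i) -add1n; apply: W_had.
Qed.

Lemma W_sum (I : finType) d (F : I -> 'cV[R]_n) :
  (forall i, W d (F i)) -> W d (\sum_i F i).
Proof. by move=> H k dk; rewrite mulmx_sumr big1 // => i _; exact: H. Qed.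

Lemma zeta_W a (p : {poly R}) d : (size p <= d.+1)%N -> W d (zeta Y a p).
Proof.
move=> sp.
have -> : zeta Y a p = \sum_(i < size p) p`_i *: hpow (\col_x dotv a (Y x)) i.
  apply/matrixP => x o; rewrite /zeta summxE !mxE horner_coef; apply: eq_bigr => i _.
  by rewrite !mxE (ord1 o) hpowE mxE.
apply: W_sum => i; apply: W_scale; apply: (@W_mono i); last exact: W_hpow (W_lin a) i.
by rewrite -ltnS (leq_trans (ltn_ord i)).
Qed.

Lemma Pol_W d g : inPol Y d g -> W d g.
Proof.
case=> l [Hl ->]; elim: l Hl => [|[a p] l IH] /=; first by move=> _; rewrite big_nil; exact: W0.
by case/andP=> Hs' Hl; rewrite big_cons; apply: W_add; [exact: zeta_W | exact: IH].
Qed.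

Lemma Pol0 d : inPol Y d 0.
Proof. by exists [::]; split => //; rewrite big_nil. Qed.

Lemma Pol_add d f g : inPol Y d f -> inPol Y d g -> inPol Y d (f + g).
Proof.
case=> l1 [H1 ->] [l2 [H2 ->]]; exists (l1 ++ l2); split.
  by rewrite all_cat H1 H2.
by rewrite big_cat.
Qed.

Lemma Pol_zeta d a (p : {poly R}) : (size p <= d.+1)%N -> inPol Y d (zeta Y a p).
Proof. by move=> sp; exists [:: (a, p)]; split; rewrite /= ?sp // big_seq1. Qed.

Lemma Pol_sum (I : finType) d (F : I -> 'cV[R]_n) :
  (forall i, inPol Y d (F i)) -> inPol Y d (\sum_i F i).
Proof.
move=> H; apply: (big_ind (inPol Y d)); [exact: Pol0 | exact: Pol_add | by move=> i _].
Qed.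

Lemma W_Pol d g : W d g -> inPol Y d g.
Proof.
move=> Wg; rewrite (Edecomp g); apply: Pol_sum => l.
case: (ltnP d l) => [dl|ld]; first by rewrite Wg //; exact: Pol0.
have -> : E l *m g = \sum_y zeta Y (Y y) ((g y 0 / n%:R) *: v l).
  apply/matrixP => x o; rewrite (ord1 o) summxE !mxE; apply: eq_bigr => y _.
  rewrite mxE hornerZ Hdot vE (Esym l y x) mulrA divfK ?nR_neq0 //.
  by rewrite mulrC.
apply: Pol_sum => y; apply: Pol_zeta.
by rewrite (leq_trans (size_scale_leq _ _)) // (Hv l).1.
Qed.


Lemma innerC_sym k (g h : 'cV[R]_n) : innerC g (E k *m h) = innerC (E k *m g) h.
Proof.
rewrite /innerC; congr (_ * _).
transitivity (\sum_x \sum_y g x 0 * E k x y * h y 0).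
  by apply: eq_bigr => x _; rewrite mxE mulr_sumr; apply: eq_bigr => y _; rewrite mulrA.
rewrite exchange_big; apply: eq_bigr => y _; rewrite mxE mulr_suml.
by apply: eq_bigr => x _; rewrite (Esym k x y); ring.
Qed.

Lemma innerC0r (g : 'cV[R]_n) : innerC g 0 = 0.
Proof. by rewrite /innerC big1 ?mulr0 // => x _; rewrite mxE mulr0. Qed.

Lemma innerC0l (g : 'cV[R]_n) : innerC 0 g = 0.
Proof. by rewrite /innerC big1 ?mulr0 // => x _; rewrite mxE mul0r. Qed.

Lemma innerCBl (f g h : 'cV[R]_n) : innerC (f - g) h = innerC f h - innerC g h.
Proof.
rewrite /innerC -mulrBr -sumrB; congr (_ * _); apply: eq_bigr => x _.
by rewrite !mxE mulrBl.
Qed.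

Lemma innerC_self0 (g : 'cV[R]_n) : innerC g g = 0 -> g = 0.
Proof.
rewrite /innerC => /eqP; rewrite mulf_eq0 invr_eq0 (negbTE nR_neq0) /= => /eqP S.
apply/matrixP => x o; rewrite (ord1 o) mxE.
have H0 : forall x', true -> 0 <= g x' 0 * g x' 0 by move=> x' _; rewrite -expr2 sqr_ge0.
have := psumr_eq0P H0 S (i:=x) isT; rewrite -expr2 => /eqP.
by rewrite sqrf_eq0 => /eqP.
Qed.

Definition Hk (i : nat) (g : 'cV[R]_n) := forall k : 'I_s.+1, (k : nat) != i -> E k *m g = 0.

Lemma Hk_fix i (g : 'cV[R]_n) : (i <= s)%N -> Hk i g -> g = E (inord i) *m g.
Proof.
move=> iS Hg; rewrite {1}(Edecomp g) (bigD1 (inord i)) //= big1 ?addr0 // => k ki.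
apply: Hg; apply/eqP => ki'; move: ki; rewrite -ki' => /eqP; apply.
by apply: val_inj; rewrite /= inordK.
Qed.

Lemma Harm_iff i (g : 'cV[R]_n) : (i <= s)%N -> inHarm Y i g <-> Hk i g.
Proof.
move=> iS; case: i iS => [|i] iS /=.
  split=> [/Pol_W Wg k k0|Hg]; first by apply: Wg; rewrite lt0n.
  by apply: W_Pol => k k0; apply: Hg; rewrite -lt0n.
split=> [[/Pol_W Wg Orth] k ki|Hg].
  case: (ltngtP i.+1 k) => [ik|kil|ek]; first by apply: Wg.
    2: by move: ki; rewrite -ek eqxx.
  apply: innerC_self0.
  rewrite -innerC_sym mulmxA Eidem; apply: Orth; apply: W_Pol => k' ik'.
  by rewrite mulmxA Eorth ?mul0mx //; apply/eqP => kk; move: ik'; rewrite kk ltnNge -ltnS kil.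
split.
  by apply: W_Pol => k ik; apply: Hg; rewrite neq_ltn ik orbT.
move=> h /Pol_W Wh; rewrite (Hk_fix iS Hg) -innerC_sym Wh ?innerC0r //.
by rewrite inordK.
Qed.

Lemma proj_iff i (F : 'M[R]_n) : (i <= s)%N -> is_orth_proj (inHarm Y i) F <-> F = E (inord i).
Proof.
move=> iS; set ii : 'I_s.+1 := inord i.
have iiE : (ii : nat) = i by rewrite inordK.
have Hii : forall g, Hk i (E ii *m g).
  move=> g k ki; rewrite mulmxA Eorth ?mul0mx //; apply/eqP => kk; move: ki.
  by rewrite kk iiE eqxx.
have Orth : forall g h, Hk i h -> innerC (g - E ii *m g) h = 0.
  move=> g h Hh; rewrite (Hk_fix iS Hh) -/ii innerC_sym mulmxBr mulmxA Eidem subrr.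
  exact: innerC0l.
split=> [HF|->]; last first.
  by move=> g; split; [apply/Harm_iff => //; exact: Hii | move=> h /(Harm_iff _ iS) /Orth].
apply: mx_ext_mul => g.
have [/(Harm_iff _ iS) HFg OF] := HF g.
set u := F *m g - E ii *m g.
have Hu : Hk i u by move=> k ki; rewrite mulmxBr HFg // Hii // subrr.
have Hu' : inHarm Y i u by apply/Harm_iff.
have : innerC u u = 0.
  have eu : u = (g - E ii *m g) - (g - F *m g) by rewrite opprB addrC addrA subrK.
  by rewrite {1}eu innerCBl Orth // OF // subrr.
by move/innerC_self0/eqP; rewrite subr_eq0 => /eqP.
Qed.


Lemma sum_seq_pick (A : seq R) (b : R) (G : R -> R) : uniq A -> b \in A ->
  \sum_(a <- A) (b == a)%:R * G a = G b.
Proof.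
move=> uA bA; rewrite (big_rem b) //= eqxx mul1r big1_seq ?addr0 // => a /andP[_ aA].
have : a != b by apply: contraTneq aA => ->; rewrite mem_rem_uniqF.
by rewrite eq_sym => /negbTE ->; rewrite mul0r.
Qed.

Lemma pinner_eq (p r : {poly R}) : pinner Y p r = (n%:R ^+ 2)^-1 *
   \sum_x \sum_y p.[dotv (Y x) (Y y)] * r.[dotv (Y x) (Y y)].
Proof.
rewrite /pinner; congr (_ * _).
set D := fun pr : 'I_n * 'I_n => dotv (Y pr.1) (Y pr.2).
have kE : forall a, (kappa Y a)%:R = \sum_(pr : 'I_n * 'I_n) (D pr == a)%:R :> R.
  move=> a; rewrite /kappa -sum1_card natr_sum big_mkcond /=; apply: eq_bigr => pr _.
  by rewrite unfold_in /=; case: (_ == a).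
have uA : uniq (Aprime Y) by rewrite undup_uniq.
have DA : forall pr, D pr \in Aprime Y.
  move=> [x y]; rewrite mem_undup inE /D /=; case: (eqVneq x y) => [->|ne].
    by rewrite dot_diag eqxx.
  apply/orP; right; apply/mapP; exists (x, y) => //.
  by rewrite mem_enum unfold_in /=.
transitivity (\sum_(a <- Aprime Y) \sum_(pr : 'I_n * 'I_n) (D pr == a)%:R * (p.[a] * r.[a])).
  by apply: eq_bigr => a _; rewrite kE -mulrA mulr_suml.
rewrite exchange_big /= pair_big /=; apply: eq_bigr => pr _.
by rewrite (sum_seq_pick (fun a => p.[a] * r.[a]) uA (DA pr)).
Qed.


Lemma sum_pull (a : R) (F : 'I_n -> 'I_n -> R) :
  \sum_x \sum_y a * F x y = a * \sum_x \sum_y F x y.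
Proof. by rewrite mulr_sumr; apply: eq_bigr => x _; rewrite mulr_sumr. Qed.

Lemma pinner_sumr (p : {poly R}) (d : 'I_s.+1 -> R) (w : 'I_s.+1 -> {poly R}) :
  pinner Y p (\sum_h d h *: w h) = \sum_h d h * pinner Y p (w h).
Proof.
rewrite pinner_eq.
transitivity ((n%:R ^+ 2)^-1 * \sum_h \sum_x \sum_y
   d h * (p.[dotv (Y x) (Y y)] * (w h).[dotv (Y x) (Y y)])).
  congr (_ * _); rewrite [RHS]exchange_big; apply: eq_bigr => x _.
  rewrite [RHS]exchange_big; apply: eq_bigr => y _.
  rewrite horner_sum mulr_sumr; apply: eq_bigr => h _; rewrite hornerZ; ring.
rewrite mulr_sumr; apply: eq_bigr => h _; rewrite pinner_eq sum_pull; ring.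
Qed.

Lemma pinnerZr (p r : {poly R}) c : pinner Y p (c *: r) = c * pinner Y p r.
Proof.
rewrite !pinner_eq [RHS]mulrCA -[in RHS]sum_pull; congr (_ * _).
by apply: eq_bigr => x _; apply: eq_bigr => y _; rewrite hornerZ; ring.
Qed.

Lemma pinner_vE (c : 'I_s.+1 -> R) (l : 'I_s.+1) :
  pinner Y (\sum_h c h *: v h) (v l) = c l * \tr (E l).
Proof.
rewrite pinner_eq.
transitivity ((n%:R ^+ 2)^-1 * (n%:R ^+ 2 * (c l * \tr (E l)))); last first.
  by rewrite mulKf // expf_neq0 // nR_neq0.
congr (_ * _).
transitivity (\sum_x \sum_y \sum_h n%:R ^+ 2 * (c h * (E h x y * E l x y))).
  apply: eq_bigr => x _; apply: eq_bigr => y _.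
  rewrite Hdot horner_sum vE mulr_suml; apply: eq_bigr => h _; rewrite hornerZ vE; ring.
under eq_bigr do rewrite exchange_big.
rewrite exchange_big /= (bigD1 l) //= [X in _ + X]big1 ?addr0.
  by rewrite sum_pull sum_pull Efrob eqxx mul1r.
move=> h hl; rewrite sum_pull sum_pull Efrob (negbTE hl).
by rewrite !mul0r !mulr0.
Qed.

Lemma q_eq (q : nat -> {poly R}) : predegree Y s q ->
  forall i, (i <= s)%N -> q i = v (inord i).
Proof.
move=> Hq i iS; set ii : 'I_s.+1 := inord i.
have iiE : (ii : nat) = i by rewrite inordK.
have Hqs : forall h : 'I_s.+1, size (q h) = h.+1.
  by move=> h; exact: (Hq h h (leq_ord h) (leq_ord h)).1.
have [c [c0 qE]] := poly_expand (fun j => (Hv j).1) (iS : (i.+1 <= s.+1)%N)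
   (eq_leq (Hq i i iS iS).1).
have cl : forall l : 'I_s.+1, (l < i)%N -> c l = 0.
  move=> l li.
  have [d [d0 vE']] := poly_expand (w := fun h : 'I_s.+1 => q h) Hqs (ltn_ord l)
     (eq_leq (Hv l).1).
  have : pinner Y (q i) (v l) = 0.
    rewrite vE' pinner_sumr big1 // => h _.
    case: (ltnP l h) => [lh|hl]; first by rewrite d0 // mul0r.
    rewrite (Hq i h iS (leq_ord h)).2.
    have -> : (i == h) = false by apply/negbTE; rewrite neq_ltn (leq_ltn_trans hl li) orbT.
    by rewrite mul0r mulr0.
  rewrite {1}qE pinner_vE => /eqP; rewrite mulf_eq0 (negbTE (trE_neq0 l)) orbF.
  by move/eqP.
have qE2 : q i = c ii *: v ii.
  rewrite qE (bigD1 ii) //= big1 ?addr0 // => h hi.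
  case: (ltngtP h i) => [hl|ih|he]; first by rewrite cl // scale0r.
    by rewrite c0 // scale0r.
  have hii : h = ii by apply: val_inj => /=; rewrite iiE.
  by rewrite hii eqxx in hi.
have cn0 : c ii != 0.
  apply/eqP => cz; have := (Hq i i iS iS).1; rewrite qE2 cz scale0r size_poly0.
  by [].
have x0 : 'I_n := Ordinal n_gt0.
have H1 : pinner Y (q i) (q i) = c ii * (c ii * \tr (E ii)).
  by rewrite {2}qE2 pinnerZr qE pinner_vE.
have H2 : (q i).[m%:R] = c ii * \tr (E ii).
  by rewrite qE2 hornerZ -(dot_diag x0) Hdot vE Ediag.
have := (Hq i i iS iS).2; rewrite eqxx mul1r H1 H2 => /(mulfI cn0).
rewrite -[X in _ = X]mul1r => /(mulIf (trE_neq0 ii)) c1.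
by rewrite qE2 c1 scale1r.
Qed.

Lemma main_sec (q : nat -> {poly R}) : predegree Y s q ->
  is_degree Y s /\ (forall i : nat, (i <= s)%N -> forall F : 'M[R]_n,
     is_orth_proj (inHarm Y i) F <->
     F = (n%:R)^-1 *: \matrix_(x, y) (q i).[dotv (Y x) (Y y)]).
Proof.
move=> Hq; split.
  split=> [g|i si Hall].
    by apply: W_Pol => k sk; move: sk; rewrite ltnNge leq_ord.
  have /eqP := Hnz ord_max; apply; apply: mx_ext_mul => g.
  by rewrite mul0mx; apply: (Pol_W (Hall g)).
move=> i iS F; rewrite proj_iff //.
have -> : (n%:R)^-1 *: \matrix_(x, y) (q i).[dotv (Y x) (Y y)] = E (inord i) :> 'M[R]_n.
  apply/matrixP => x y; rewrite !mxE (q_eq Hq iS) Hdot vE mulKf // nR_neq0.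
  by [].
by [].
Qed.

End Main.

Theorem lemma3p5 (R : realFieldType) (n s : nat) (rc : 'I_n -> 'I_n -> 'I_s.+1)
  (E : 'I_s.+1 -> 'M[R]_n) (m : nat) (Y : 'I_n -> 'rV[R]_m) (q : nat -> {poly R}) :
  (0 < s)%N ->
  is_sym_assoc_scheme rc ->
  primitive_idempotents rc E ->
  Q_polynomial E ->
  m = \rank (E (inord 1)) ->
  (forall x y, dotv (Y x) (Y y) = n%:R * E (inord 1) x y) ->
  predegree Y s q ->
  is_degree Y s /\
  (forall i : nat, (i <= s)%N -> forall F : 'M[R]_n,
     is_orth_proj (inHarm Y i) F <->
     F = (n%:R)^-1 *: \matrix_(x, y) (q i).[dotv (Y x) (Y y)]).
Proof.
move=> Hs [Hrc0 Hsym _ _] [HBM Hmul Hnz Hsum HE0] [v Hv] Hm Hdot Hq.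
by apply: (@main_sec R n s rc E m Y v); try eassumption.
Qed.
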